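(* Let $A,B\subseteq\mathbb{N}$ be such that $\lim_{n\to\infty}\frac{B(n)-A(n)}{n}$ exists and is $>0$. Then there is a set $D$ with $A\cap B\subseteq D\subseteq B$ and $\lim_{n\to\infty}\frac{D(n)-A(n)}{n}=0$. In particular, $B\setminus D\in\mathcal{D}$.
   Context: $\mathbb{N}=\{1,2,3,\dots\}$. For $A\subseteq\mathbb{N}$ let $A(n)=|A\cap[1,n]|$. Let $\mathcal{D}$ be the collection of all $A\subseteq\mathbb{N}$ for which the asymptotic density $d(A)=\lim_{n\to\infty}\frac{A(n)}{n}$ exists. *)

(* Defs.v *)
From HB Require Import structures.
From mathcomp Require Import all_boot all_order all_algebra.
From mathcomp Require Import boolp classical_sets reals topology normedtype sequences.
Set Implicit Arguments. Unset Strict Implicit. Unset Printing Implicit Defensive.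
Import Order.TTheory GRing.Theory Num.Theory numFieldNormedType.Exports.
Local Open Scope classical_set_scope.
Local Open Scope ring_scope.

(* Subsets of N = {1,2,3,...} are modelled as [set nat] contained in the positives. *)
Definition posnat : set nat := [set n | (0 < n)%N].

Definition cnt (A : set nat) (n : nat) : nat :=
  (\sum_(1 <= k < n.+1) (k \in A : nat))%N.

Definition reldiff (R : realType) (X Y : set nat) : nat -> R :=
  fun n => ((cnt X n)%:R - (cnt Y n)%:R) / n%:R.

(* A ∈ 𝒟 : the asymptotic density lim A(n)/n exists (as a real number). *)
Definition has_density (R : realType) (A : set nat) : Prop :=
  exists l : R, (fun n : nat => (cnt A n)%:R / n%:R : R) @ \oo --> l.

(* Main.v *)
Require Import Defs.
From HB Require Import structures.
From mathcomp Require Import all_boot all_order all_algebra.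
From mathcomp Require Import boolp classical_sets reals topology normedtype sequences.
From mathcomp Require Import zify ring lra.
Import Order.TTheory GRing.Theory Num.Theory numFieldNormedType.Exports.
Local Open Scope classical_set_scope.
Local Open Scope ring_scope.

Lemma cntS (X : set nat) n : cnt X n.+1 = (cnt X n + (n.+1 \in X))%N.
Proof. by rewrite /cnt big_nat_recr. Qed.

Lemma cnt0 (X : set nat) : cnt X 0 = 0%N.
Proof. by rewrite /cnt big_geq. Qed.

Lemma cnt_le (X : set nat) n : (cnt X n <= n)%N.
Proof. elim: n => [|n IH]; first by rewrite cnt0. rewrite cntS; case: (_ \in _) => /=; lia. Qed.

Definition recE (A B : set nat) : set nat :=
  [set k | (0 < k)%N /\ forall m, (m < k)%N -> (cnt B m + cnt A k < cnt B k + cnt A m)%N].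

Lemma recE_inv (A B : set nat) n :
  (forall m, (m <= n)%N -> (cnt B m <= cnt (recE A B) n + cnt A m)%N) /\
  exists m, (m <= n)%N /\ cnt B m = (cnt (recE A B) n + cnt A m)%N.
Proof.
elim: n => [|n [IH1 [m0 [Hm0 Em0]]]].
  split; first by move=> m; rewrite leqn0 => /eqP ->; rewrite !cnt0.
  by exists 0%N; rewrite !cnt0.
have HB := cntS B n; have HA := cntS A n; have HE := cntS (recE A B) n.
case: (boolP (n.+1 \in recE A B)) => hE; [rewrite hE /= in HE|rewrite (negbTE hE) /= in HE].
- move: hE; rewrite in_setE => -[_ hE].
  have h1 := hE m0 (leq_ltn_trans Hm0 (ltnSn n)).
  have h2 := IH1 n (leqnn n).
  split.
    move=> m; rewrite leq_eqVlt => /orP [/eqP ->|]; last first.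
      by rewrite ltnS => /IH1; lia.
    move: HB HA; case: (n.+1 \in B); case: (n.+1 \in A) => /=; lia.
  exists n.+1; split => //.
  move: HB HA h1; case: (n.+1 \in B); case: (n.+1 \in A) => /=; lia.
- have [m [Hm Hlt]] : exists m, (m < n.+1)%N /\ (cnt B n.+1 + cnt A m <= cnt B m + cnt A n.+1)%N.
    apply: contra_notP (negP hE) => H; rewrite in_setE; split => // m Hm.
    rewrite ltnNge; apply/negP => H'; apply: H; exists m; split => //.
  split.
    move=> m'; rewrite leq_eqVlt => /orP [/eqP ->|]; last first.
      by rewrite ltnS => /IH1; lia.
    have := IH1 m; rewrite -ltnS => /(_ Hm); lia.
  exists m0; split; [exact: leqW | lia].
Qed.

Lemma recE_sub (A B : set nat) : recE A B `<=` B.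
Proof.
move=> k [k0 H]; suff: (k \in B) by rewrite in_setE.
have := H k.-1; rewrite prednK // => /(_ (ltnSn _)).
have HB := cntS B k.-1; have HA := cntS A k.-1; rewrite prednK // in HB HA.
move: HB HA; case: (k \in B); case: (k \in A) => //= HB HA H1; lia.
Qed.
Lemma inD (X Y : set nat) x : (x \in X `\` Y) = (x \in X) && (x \notin Y).
Proof. apply/idP/andP; rewrite !in_setE ?notin_setE; by case.
Qed.

Lemma cnt_ext (X Y : set nat) : (forall x, (x \in X) = (x \in Y)) -> forall n, cnt X n = cnt Y n.
Proof. by move=> H n; apply: eq_bigr => i _; rewrite H. Qed.

Lemma cntDE (A B : set nat) n :
  (cnt (B `\` recE A B) n + cnt (recE A B) n)%N = cnt B n.
Proof.
elim: n => [|n IH]; first by rewrite !cnt0.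
rewrite !cntS inD -IH.
case: (boolP (n.+1 \in recE A B)) => hE.
  have: n.+1 \in B by move: hE; rewrite !in_setE; exact: (@recE_sub A B n.+1).
  by move=> ->; rewrite /=; lia.
by rewrite andbT; case: (_ \in B) => /=; lia.
Qed.

Theorem lemma3p13 (R : realType) (A B : set nat)
  (hA : A `<=` posnat) (hB : B `<=` posnat)
  (hlim : exists l : R, 0 < l /\ reldiff R B A @ \oo --> l) :
  exists D : set nat,
    [/\ A `&` B `<=` D, D `<=` B,
        reldiff R D A @ \oo --> (0 : R)
      & has_density R (B `\` D)].
Proof.
have [l [l0 hl]] := hlim.
set E := recE A B.
have hD : forall n, ((cnt (B `\` E) n)%:R : R) = (cnt B n)%:R - (cnt E n)%:R.
  by move=> n; rewrite -(cntDE A B n) natrD addrK.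
have hDA : reldiff R (B `\` E) A @ \oo --> (0 : R).
  apply/cvgr0Pnorm_lt => e e0.
  have e40 : 0 < e / 4 by rewrite divr_gt0.
  have [N1 _ HN1] := (cvgrPdist_lt _ _).1 hl (e/4) e40.
  have [N2 _ HN2] := (cvgryPgt _).1 (@cvgr_idn R) (4 * N1%:R / e).
  exists (maxn (maxn N1 N2) 1) => // n /=.
  rewrite !geq_max => /andP [/andP [Hn1 Hn2] Hn].
  have := HN2 n Hn2; have := HN1 n Hn1 => /=.
  have [Hi1 [m0 [Hm0 Em0]]] := recE_inv A B n.
  have Hbn := Hi1 n (leqnn n).
  have Hc : ((cnt E n)%:R : R) <= N1%:R + (l + e/4) * n%:R.
    rewrite -/E in Em0.
    have lep : 0 <= (l + e/4) * n%:R by rewrite mulr_ge0 // ltW // addr_gt0.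
    have [Hm|[Hm Hm']] : (m0 <= N1)%N \/ (N1 <= m0 /\ 0 < m0)%N by lia.
      have := cnt_le B m0; rewrite Em0 => Hle.
      have : (cnt E n <= N1)%N by lia.
      rewrite -(ler_nat R) => H; lra.
    have := HN1 m0 Hm; rewrite /= /reldiff Em0 natrD addrK ltr_norml => /andP [h1 h2].
    have mm0 : (0:R) < m0%:R by rewrite ltr0n.
    have Hmn : (m0%:R : R) <= n%:R by rewrite ler_nat.
    set c := (cnt E n)%:R in h1 h2 *; set mm := (m0%:R : R) in mm0 Hmn h1 h2 *.
    set q := c / mm in h1 h2; have Hq : q * mm = c by rewrite /q mulfVK // gt_eqF.
    have P1 : (l - q) * mm > - (e/4) * mm by rewrite ltr_pM2r.
    have P2 : (l + e/4) * mm <= (l + e/4) * n%:R by rewrite ler_pM2l // addr_gt0.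
    have : 0 <= (N1%:R : R) by [].
    nra.
  rewrite /reldiff hD.
  have nn0 : (0 : R) < n%:R by rewrite ltr0n.
  move: Hbn; rewrite -(ler_nat R) natrD => Hbn.
  set b := (cnt B n)%:R; set a := (cnt A n)%:R; set c := (cnt E n)%:R.
  set nn := (n%:R : R).
  move: Hc Hbn; rewrite -/c -/nn -/a -/b => Hc Hbn.
  set q := (b - a) / nn; have Hq : q * nn = b - a by rewrite /q mulfVK // gt_eqF.
  set w := 4 * N1%:R / e; have Hw : w * e = 4 * N1%:R by rewrite /w mulfVK // gt_eqF.
  have -> : (b - c - a) / nn = q - c / nn by rewrite /q; field; rewrite gt_eqF.
  set r := c / nn; have Hr : r * nn = c by rewrite /r mulfVK // gt_eqF.
  rewrite !ltr_norml => /andP [h1 h2] h3; apply/andP; split.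
  - have P1 : (l - q) * nn < e/4 * nn by rewrite ltr_pM2r.
    have P2 : w * e < nn * e by rewrite ltr_pM2r.
    suff : (r - q) * nn < e * nn by rewrite ltr_pM2r //; lra.
    nra.
  - suff : (q - r) * nn < e * nn by rewrite ltr_pM2r //; lra.
    nra.
exists (B `\` E); split.
- move=> k [kA kB]; split => // -[k0 H].
  have := H k.-1; rewrite prednK // => /(_ (ltnSn _)).
  have HB := cntS B k.-1; have HA := cntS A k.-1; rewrite prednK // in HB HA.
  have: k \in A by rewrite in_setE.
  have: k \in B by rewrite in_setE.
  move=> b1 a1; rewrite b1 a1 /= in HB HA; lia.
- by move=> k [].
- exact: hDA.
- exists l.
  have Hc : forall n, cnt (B `\` (B `\` E)) n = cnt E n.
    apply: cnt_ext => x; rewrite !inD negb_and negbK.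
    case: (boolP (x \in E)) => hE; last by rewrite orbF andbN.
    have -> : x \in B by move: hE; rewrite !in_setE; exact: (@recE_sub A B x).
    by [].
  have H := cvgB hl hDA; rewrite subr0 in H.
  suff -> : (fun n => (cnt (B `\` (B `\` E)) n)%:R / n%:R : R) =
    (fun n => reldiff R B A n - reldiff R (B `\` E) A n) by exact: H.
  apply/funext => n; rewrite /= /reldiff Hc hD -mulrBl; congr (_ * _); ring.
Qed.
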